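(* Let $F$ be any VSCC (over linear profiles) satisfying Coherent Defeat and Tolerant Positive Involvement. Then $F(\mathbf P)\subseteq SC(\mathbf P)$ for every profile $\mathbf P$, where $SC$ is the Split Cycle VSCC.
   Context: Profiles: $\mathbf P:V\to\mathcal L(X)$ with $V$ a nonempty finite set of voters, $X=X(\mathbf P)$ a nonempty finite set of candidates (from fixed infinite sets), $\mathcal L(X)$ the strict linear orders on $X$. $\mathrm{Margin}_{\mathbf P}(x,y)$ = #voters ranking $x$ above $y$ minus #ranking $y$ above $x$; $x$ is majority preferred to $y$ if it is $>0$. Majority path from $x_1$ to $x_n$: $(x_1,\dots,x_n)$ with all $\mathrm{Margin}_{\mathbf P}(x_i,x_{i+1})>0$; strength = minimum of these margins. $(x,y)\in sc(\mathbf P)$ iff $\mathrm{Margin}_{\mathbf P}(x,y)>0$ and it exceeds the strength of every majority path from $y$ to $x$; $SC(\mathbf P)=\{y: \text{no } x \text{ with } (x,y)\in sc(\mathbf P)\}$. A VSCC is $F$ with $\varnothing\ne F(\mathbf P)\subseteq X(\mathbf P)$ for all profiles. Coherent Defeat: if $\mathrm{Margin}_{\mathbf P}(x,y)>0$ and there is no majority path from $y$ to $x$, then $y\notin F(\mathbf P)$. Tolerant Positive Involvement: if $x\in F(\mathbf P)$ and $\mathbf P'$ is obtained from $\mathbf P$ by adding one new voter who ranks $x$ above every other candidate $y$ such that $x$ is not majority preferred to $y$ in $\mathbf P$, then $x\in F(\mathbf P')$. *)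

(* Defs.v *)
From HB Require Import structures.
From mathcomp Require Import all_boot all_order all_algebra.
From mathcomp Require Import finmap.
Set Implicit Arguments. Unset Strict Implicit. Unset Printing Implicit Defensive.
Import Order.TTheory GRing.Theory Num.Theory.
Local Open Scope fset_scope.
Local Open Scope fmap_scope.

(* Voters and candidates are drawn from the fixed infinite set nat.  A ballot lists the candidates from top to bottom; the
   listing of a strict linear order on a finite set is unique, so a ballot
   is exactly a strict linear order on X (enforced by [valid_profile]). *)
Definition profile := ({fmap nat -> seq nat} * {fset nat})%type.

Definition voters (P : profile) : {fset nat} := domf P.1.
Definition cands (P : profile) : {fset nat} := P.2.
Definition ballot (P : profile) (v : nat) : seq nat := odflt [::] P.1.[? v].

Definition valid_profile (P : profile) : bool :=
  [&& voters P != fset0, cands P != fset0 &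
      all (fun v => perm_eq (ballot P v) (enum_fset (cands P)))
          (enum_fset (voters P))].

Definition ranks_above (P : profile) (v x y : nat) : bool :=
  index x (ballot P v) < index y (ballot P v).

Definition margin (P : profile) (x y : nat) : int :=
  (count (fun v => ranks_above P v x y) (enum_fset (voters P)))%:Z
  - (count (fun v => ranks_above P v y x) (enum_fset (voters P)))%:Z.

Definition maj_pref (P : profile) (x y : nat) : bool := (0 < margin P x y)%R.

Definition majority_path (P : profile) (a : nat) (s : seq nat) (b : nat) : Prop :=
  [/\ s <> [::], last a s = b, all (fun c => c \in cands P) (a :: s)
    & path (maj_pref P) a s].

Fixpoint strength (P : profile) (a : nat) (s : seq nat) : int :=
  match s with
  | [::] => 0%R
  | [:: b] => margin P a b
  | b :: s' => Num.min (margin P a b) (strength P b s')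
  end.

Definition sc (P : profile) (x y : nat) : Prop :=
  (0 < margin P x y)%R /\
  forall s, majority_path P y s x -> (strength P y s < margin P x y)%R.

Definition in_SC (P : profile) (y : nat) : Prop :=
  y \in cands P /\ ~ (exists x, sc P x y).

Definition VSCC (F : profile -> {fset nat}) : Prop :=
  forall P, valid_profile P -> F P != fset0 /\ F P `<=` cands P.

Definition coherent_defeat (F : profile -> {fset nat}) : Prop :=
  forall P x y, valid_profile P -> x \in cands P -> y \in cands P ->
    maj_pref P x y -> ~ (exists s, majority_path P y s x) -> y \notin F P.

Definition add_voter (P : profile) (i : nat) (b : seq nat) : profile :=
  (P.1.[i <- b], P.2).

Definition tolerant_positive_involvement (F : profile -> {fset nat}) : Prop :=
  forall P x i b, valid_profile P -> x \in F P ->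
    i \notin voters P -> perm_eq b (enum_fset (cands P)) ->
    (forall y, y \in cands P -> y != x -> ~~ maj_pref P x y ->
       index x b < index y b) ->
    x \in F (add_voter P i b).

(* Main.v *)
Require Import Defs.
From HB Require Import structures.
From mathcomp Require Import all_boot all_order all_algebra.
From mathcomp Require Import finmap.
From mathcomp Require Import zify.
From Stdlib Require Import ClassicalEpsilon.
Local Open Scope fset_scope.
Import Order.TTheory GRing.Theory Num.Theory.

Lemma voters_add P i b : voters (add_voter P i b) = i |` voters P.
Proof. exact: dom_setf. Qed.

Lemma ballot_add P i b v : ballot (add_voter P i b) v = if v == i then b else ballot P v.
Proof. by rewrite /ballot /add_voter /= fnd_set; case: (v == i). Qed.

Lemma count_add (p : pred nat) (V : {fset nat}) i : i \notin V ->
  count p (enum_fset (i |` V)) = (p i + count p (enum_fset V))%N.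
Proof.
move=> iV.
have pe : perm_eq (enum_fset (i |` V)) (i :: enum_fset V).
  apply: uniq_perm; first exact: fset_uniq.
    by rewrite /= fset_uniq andbT.
  move=> z. rewrite inE in_fset1 inE.
  by [].
by rewrite (permP pe) /=.
Qed.

Lemma margin_add P i b c d : i \notin voters P -> c \in b -> d \in b -> c != d ->
  margin (add_voter P i b) c d =
  (margin P c d + (if (index c b < index d b)%N then 1 else -1))%R.
Proof.
move=> iV cb db cd.
rewrite /margin voters_add !count_add //.
have E : forall x y, count (fun v => ranks_above (add_voter P i b) v x y) (enum_fset (voters P))
   = count (fun v => ranks_above P v x y) (enum_fset (voters P)).
  move=> x y; apply: eq_in_count => v vV.
  rewrite /ranks_above ballot_add.
  case: eqP => // vi; subst v. by rewrite vV in iV.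
rewrite !E /ranks_above !ballot_add eqxx.
case: (ltngtP (index c b) (index d b)) => H.
- lia.
- lia.
- by move: (index_inj 0 cb db H) => /eqP; rewrite (negbTE cd).
Qed.
Lemma valid_add P i b : valid_profile P -> i \notin voters P ->
  perm_eq b (enum_fset (cands P)) -> valid_profile (add_voter P i b).
Proof.
move=> /and3P [_ c0 /allP al] iV pb.
apply/and3P; split => //.
  rewrite voters_add; apply/eqP => H.
  by have := fset1U1 i (voters P); rewrite H in_fset0.
apply/allP => v; rewrite voters_add in_fset1U ballot_add.
case: eqP => [-> //|_] /= vV.
exact: al.
Qed.

Lemma in_ballot P v c : valid_profile P -> v \in voters P -> c \in cands P ->
  c \in ballot P v.
Proof.
move=> /and3P [_ _ /allP al] vV cC.
by rewrite (perm_mem (al v vV)).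
Qed.

Lemma count_sum P c d : valid_profile P -> c \in cands P -> d \in cands P -> c != d ->
  (count (fun v => ranks_above P v c d) (enum_fset (voters P)) +
   count (fun v => ranks_above P v d c) (enum_fset (voters P)))%N
  = size (enum_fset (voters P)).
Proof.
move=> vP cC dC cd.
rewrite -count_predUI.
have -> : count (predI (fun v => ranks_above P v c d) (fun v => ranks_above P v d c))
   (enum_fset (voters P)) = 0%N.
  apply/eqP; rewrite -leqn0 leqNgt -has_count; apply/hasP => -[v _] /=.
  rewrite /ranks_above => /andP [h1 h2]; lia.
rewrite addn0 -[RHS]count_predT; apply: eq_in_count => v vV /=.
rewrite /ranks_above.
have cb := in_ballot _ _ _ vP vV cC; have db := in_ballot _ _ _ vP vV dC.
case: (ltngtP (index c (ballot P v)) (index d (ballot P v))) => // H.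
by move: (index_inj 0 cb db H) => /eqP; rewrite (negbTE cd).
Qed.

Lemma margin_sym P c d : margin P d c = (- margin P c d)%R.
Proof. rewrite /margin; lia. Qed.

Lemma margin_refl P c : margin P c c = 0%R.
Proof. rewrite /margin; lia. Qed.

Lemma margin_pos_cand P c d : valid_profile P -> (0 < margin P c d)%R -> c \in cands P.
Proof.
move=> /and3P [_ _ /allP al] H.
have : (0 < count (fun v => ranks_above P v c d) (enum_fset (voters P)))%N.
  move: H; rewrite /margin; lia.
rewrite -has_count => /hasP [v vV]; rewrite /ranks_above => h.
have : c \in ballot P v.
  rewrite -index_mem. apply: (leq_trans h). by rewrite -ltnS ltnS index_size.
by rewrite (perm_mem (al v vV)).
Qed.

Lemma parity P a c x y : valid_profile P -> a \in cands P -> c \in cands P -> a != c ->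
  x \in cands P -> y \in cands P -> x != y ->
  margin P x y = 2%R -> margin P a c <> 1%R.
Proof.
move=> vP aC cC ac xC yC xy.
have h1 := count_sum _ _ _ vP aC cC ac.
have h2 := count_sum _ _ _ vP xC yC xy.
rewrite /margin. lia.
Qed.

Lemma fresh_voter (V : {fset nat}) : exists i, i \notin V.
Proof.
exists (\max_(v <- enum_fset V) v).+1; apply/negP => H.
have := @leq_bigmax_seq _ _ xpredT (fun v => v) _ H isT. by rewrite ltnn.
Qed.
Lemma strength_rcons P (m : int) a s c : s <> [::] ->
  (m <= strength P a (rcons s c))%R =
  (m <= strength P a s)%R && (m <= margin P (last a s) c)%R.
Proof.
elim: s a => [//|b s IH] a _.
case: s IH => [|b' s'] IH.
  by rewrite /= le_min.
have E1 : forall x y z t, strength P x (y :: z :: t) = Num.min (margin P x y) (strength P y (z :: t)) by [].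
rewrite !rcons_cons !E1 -rcons_cons.
have := IH b (fun h => ltac:(discriminate)).
move=> IHb; by rewrite !le_min IHb andbA.

Qed.

Lemma sort_index (key : nat -> nat) (L : seq nat) c d :
  c \in L -> d \in L -> key c < key d ->
  index c (sort (fun u v => key u <= key v) L) < index d (sort (fun u v => key u <= key v) L).
Proof.
move=> cL dL kcd.
set b := sort _ L.
have cb : c \in b by rewrite mem_sort.
have db : d \in b by rewrite mem_sort.
have tr : transitive (fun u v => key u <= key v) by move=> y x z h1 h2; exact: leq_trans h1 h2.
have st : sorted (fun u v => key u <= key v) b.
  apply: sort_sorted => u v; exact: leq_total.
case: (ltngtP (index c b) (index d b)) => // H.
  have := sorted_ltn_index tr st d c db cb H. by rewrite leqNgt kcd.
have := index_inj 0 cb db H => E; subst d. by rewrite ltnn in kcd.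
Qed.

Lemma no_cross P (inA : pred nat) :
  (forall u v, inA u -> v \in cands P -> ~~ inA v -> ~~ maj_pref P u v) ->
  forall s a, inA a -> all (fun c => c \in cands P) s -> path (maj_pref P) a s ->
  inA (last a s).
Proof.
move=> cut; elim => [//|b s IH] a Aa /= /andP [bC sC] /andP [ab ps].
apply: IH => //.
apply/negPn/negP => nb.
by have := cut _ _ Aa bC nb; rewrite ab.
Qed.

Lemma ar1 n : (0 < Posz n)%R -> (0 < n)%N. Proof. lia. Qed.
Lemma ar2 (a c : int) n : (a < c)%R -> (0 < a)%R -> (n <= 1)%N -> c = Posz n.+1 -> a = 1%R /\ c = 2%R.
Proof. lia. Qed.
Lemma ar3 n : (0 < Posz n.+1)%R. Proof. lia. Qed.
Lemma ar4 (a : int) : (0 < a)%R -> (0 < - a)%R = false. Proof. lia. Qed.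
Lemma ar5 n : (Posz n.+1 - 1)%R = Posz n. Proof. lia. Qed.
Lemma ar6 (a b : int) : (a < b)%R -> (a + -1 < b - 1)%R. Proof. lia. Qed.
Lemma ar7 (a b : int) n : (a <= 0)%R -> b = Posz n.+1 -> (1 < n)%N -> (a + 1 < b - 1)%R. Proof. lia. Qed.
Lemma nasym (a b : nat) : (a < b)%N -> (b < a)%N -> False. Proof. lia. Qed.

Definition decb (Q : Prop) : bool := if excluded_middle_informative Q then true else false.
Lemma decbP (Q : Prop) : reflect Q (decb Q).
Proof. rewrite /decb; case: excluded_middle_informative => h; by constructor. Qed.

Theorem theorem6p5 (F : profile -> {fset nat}) :
  VSCC F -> coherent_defeat F -> tolerant_positive_involvement F ->
  forall P, valid_profile P -> forall y, y \in F P -> in_SC P y.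
Proof.
move=> HV HCD HTPI P vP y yF.
have yC : y \in cands P.
  have [_ /fsubsetP] := HV P vP; apply; exact: yF.
split => // -[x [mpos Hs]].
have xC := margin_pos_cand _ _ _ vP mpos.
have xy : x != y.
  apply/eqP => E; subst x; by rewrite margin_refl ltxx in mpos.
pose inA := fun c : nat => (c \in cands P) &&
  decb (c = y \/ exists s, majority_path P y s c /\
       (margin P x y <= strength P y s)%R).
have Ay : inA y.
  rewrite /inA yC /=; apply/decbP; by left.
have nAx : ~~ inA x.
  rewrite /inA; apply/negP => /andP [_ /decbP].
  case=> [E|[s [ps hs]]]; first by rewrite E eqxx in xy.
  have := Hs s ps. by rewrite ltNge hs.
have cut0 : forall a c, inA a -> c \in cands P -> ~~ inA c -> (margin P a c < margin P x y)%R.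
  move=> a c /andP [aC /decbP ha] cC.
  rewrite /inA cC /= => /decbP hc.
  rewrite ltNge; apply/negP => hm; apply: hc; right.
  case: ha => [E|[s [[s0 ls als ps] sm]]].
    subst a; exists [:: c]; split; last by [].
    split => //=; first by rewrite yC cC.
    by rewrite andbT /maj_pref (lt_le_trans mpos hm).
  exists (rcons s c); split.
    split.
    - by case: (s).
    - by rewrite last_rcons.
    - by rewrite -rcons_cons all_rcons cC als.
    - by rewrite rcons_path ps ls /maj_pref (lt_le_trans mpos hm).
  by rewrite strength_rcons // sm ls hm.
have inAC : forall c, inA c -> c \in cands P by move=> c /andP [].
suff claim : forall n Q, valid_profile Q -> y \in F Q -> cands Q = cands P ->
    margin Q x y = Posz n -> (0 < n)%N ->
    (forall a c, inA a -> c \in cands Q -> ~~ inA c -> (margin Q a c < margin Q x y)%R) ->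
    False.
  move: mpos cut0; case E: (margin P x y) => [n|n] // mpos cut0.
  apply: (claim n P vP yF erefl E); first exact: ar1.
  move=> a c Aa cC nAc; rewrite E; exact: cut0.
elim=> [|n IH] Q vQ yFQ cQ mQ n0 inv; first by [].
have xQ : x \in cands Q by rewrite cQ.
have yQ : y \in cands Q by rewrite cQ.
case: (leqP n 1) => hn.
  have cut : forall u v, inA u -> v \in cands Q -> ~~ inA v -> ~~ maj_pref Q u v.
    move=> u v Au vC nAv; apply/negP => muv.
    have uv : u != v by apply/eqP => E; subst v; rewrite Au in nAv.
    have lt := inv u v Au vC nAv.
    have uC := margin_pos_cand _ _ _ vQ muv.
    have [e1 e2] := ar2 _ _ _ lt muv hn mQ.
    exact: (parity Q u v x y vQ uC vC uv xQ yQ xy e2 e1).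
  have mp : maj_pref Q x y by rewrite /maj_pref mQ ar3.
  have H := HCD Q x y vQ xQ yQ mp.
  move: yFQ; apply/negP; apply: H.
  move=> [s [_ ls /andP [_ als] ps]].
  have := no_cross Q inA cut s y Ay als ps. by rewrite ls (negbTE nAx).
have [i iV] := fresh_voter (voters Q).
pose key := fun c : nat => if ~~ inA c && maj_pref Q y c then 0%N
  else if c == y then 1%N else if ~~ inA c then 2%N else 3%N.
pose b := sort (fun u v => key u <= key v) (enum_fset (cands Q)).
have pb : perm_eq b (enum_fset (cands Q)) by rewrite /b perm_sort.
have mb : forall c, c \in cands Q -> c \in b.
  move=> c cC; rewrite /b mem_sort; exact: cC.
have ky : key y = 1%N by rewrite /key Ay /= eqxx.
have Hidx : forall c d, c \in cands Q -> d \in cands Q -> (key c < key d)%N ->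
    (index c b < index d b)%N.
  move=> c d cC dC; exact: sort_index.
have yFQ' : y \in F (add_voter Q i b).
  apply: HTPI => // z zC zy nm.
  apply: Hidx => //; rewrite ky /key (negbTE zy) (negbTE nm) andbF.
  by case: (inA z).
have vQ' := valid_add Q i b vQ iV pb.
have mxy : margin (add_voter Q i b) x y = (margin Q x y - 1)%R.
  rewrite (margin_add Q i b x y iV (mb _ xQ) (mb _ yQ) xy).
  have : (index y b < index x b)%N.
    apply: Hidx => //; rewrite ky /key (negbTE nAx) /=.
    have -> : maj_pref Q y x = false.
      by rewrite /maj_pref margin_sym ar4 // mQ ar3.
    by rewrite (negbTE xy).
  case: ifP => h1 h2; first by case: (nasym _ _ h1 h2).
  by [].
apply: (IH (add_voter Q i b) vQ' yFQ' cQ).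
- by rewrite mxy mQ ar5.
- exact: leq_trans hn.
move=> a c Aa cC nAc.
have aQ : a \in cands Q by rewrite cQ; exact: inAC.
have ac : a != c by apply/eqP => E; subst c; rewrite Aa in nAc.
have iv := inv a c Aa cC nAc.
rewrite mxy (margin_add Q i b a c iV (mb _ aQ) (mb _ cC) ac).
case: (eqVneq a y) => [E|ay].
  subst a.
  case mp: (maj_pref Q y c).
    have : (index c b < index y b)%N.
      by apply: Hidx => //; rewrite ky /key nAc mp.
    case: ifP => h1 h2; first by case: (nasym _ _ h1 h2).
    exact: ar6.
  have : (index y b < index c b)%N.
    by apply: Hidx => //; rewrite ky /key nAc mp /= ; case: eqP => // E; subst c; rewrite Ay in nAc.
  case: ifP => h1 h2; last by move: h2.
  move: mp; rewrite /maj_pref => /negbT; rewrite -leNgt => mp.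
  exact: ar7 mp mQ hn.
have : (index c b < index a b)%N.
  apply: Hidx => //; rewrite /key Aa (negbTE ay) nAc /=.
  case: (maj_pref Q y c) => //=.
  by case: eqP => // E; subst c; rewrite Ay in nAc.
case: ifP => h1 h2; first by case: (nasym _ _ h1 h2).
exact: ar6.
Qed.
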